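(* For any $1\le y<x$ and any $v\ge \log n_{<y}$, one has (for every outcome of the random model) \[ \Delta(n_{<x})\ge \frac{\tau(n_{<y})}{2v+1}\cdot\Delta^{(v)}(n_{[y,x)}). \]
   Context: $\Delta(n)\coloneqq \max_{u\in\mathbb{R}}\#\{d\mid n: e^u<d\le e^{u+1}\}$, and for $v>0$, $\Delta^{(v)}(n)\coloneqq\max_{u\in\mathbb{R}}\#\{d\mid n: e^u<d\le e^{u+v}\}$; $\tau(n)$ is the number of divisors of $n$. Random model: for each prime $p$, $n_p$ equals $1$ with probability $\frac{p}{p+1}$ and $p$ with probability $\frac1{p+1}$, independently over $p$; $n_{<z}\coloneqq\prod_{p<z}n_p$ and $n_{[y,x)}\coloneqq\prod_{y\le p<x}n_p$, so $n_{<x}=n_{<y}n_{[y,x)}$. *)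

(* Defs.v *)
From HB Require Import structures.
From mathcomp Require Import all_boot all_order all_algebra.
From mathcomp Require Import all_classical all_reals all_analysis.
Set Implicit Arguments. Unset Strict Implicit. Unset Printing Implicit Defensive.
Import Order.TTheory GRing.Theory Num.Theory.
Local Open Scope ring_scope.

Definition tau (n : nat) : nat := size (divisors n).

Definition divcount {R : realType} (n : nat) (v u : R) : nat :=
  count (fun d : nat => (expR u < d%:R) && (d%:R <= expR (u + v))) (divisors n).

(* Delta^(v)(n) = max_u #{ d | n : e^u < d <= e^(u+v) } (as a supremum of a
   finite nonempty set of reals, hence a maximum). *)
Definition DeltaV {R : realType} (n : nat) (v : R) : R :=
  sup [set (divcount n v u)%:R | u in [set: R]].

Definition Delta {R : realType} (n : nat) : R := DeltaV n 1.

(* An outcome of the random model: omega p = true  iff  n_p = p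
   (and n_p = 1 otherwise); only primes p matter. *)

Definition n_lt {R : realType} (omega : nat -> bool) (z : R) : nat :=
  \prod_(0 <= p < (Num.truncn z).+1 | prime p && (p%:R < z) && omega p) p.

Definition n_int {R : realType} (omega : nat -> bool) (y x : R) : nat :=
  \prod_(0 <= p < (Num.truncn x).+1 | prime p && (y <= p%:R) && (p%:R < x) && omega p) p.

(* Main.v *)
Require Import Defs.
From HB Require Import structures.
From mathcomp Require Import all_boot all_order all_algebra.
From mathcomp Require Import all_classical all_reals all_analysis.
From mathcomp Require Import ring lra.
Import Order.TTheory GRing.Theory Num.Theory.
Local Open Scope ring_scope.

Lemma n_split (R : realType) omega (x y : R) : 1 <= y -> y < x ->
  n_lt omega x = (n_lt omega y * n_int omega y x)%N.
Proof.
move=> y1 yx; rewrite /n_lt /n_int.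
rewrite (bigID (fun p : nat => p%:R < y)) /=.
congr (_ * _)%N.
- rewrite (@big_nat_widen _ _ _ _ (Num.truncn y).+1 (Num.truncn x).+1); last first.
    by rewrite ltnS le_truncn // ltW.
  apply: eq_bigl => p.
  case: (ltrP (p%:R) y) => hp.
  + have -> : (p < (Num.truncn y).+1)%N.
      by rewrite ltnS truncn_ge_nat ?(ltW hp) // (le_trans _ y1).
    by rewrite (lt_trans hp yx) !andbT.
  + by case: (prime p); case: (omega p); rewrite ?andbF.
- apply: eq_bigl => p; rewrite -leNgt.
  by case: (prime p); case: (y <= _); case: (_ < x); case: (omega p).
Qed.

Lemma coprime_prods (P Q : pred nat) n1 n2 :
  (forall p q, P p -> Q q -> [&& prime p, prime q & p != q]) ->
  coprime (\prod_(0 <= p < n1 | P p) p) (\prod_(0 <= q < n2 | Q q) q).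
Proof.
move=> H.
apply: (big_ind (fun a => coprime a (\prod_(0 <= q < n2 | Q q) q))) => [|a b ha hb|p Pp].
- exact: coprime1n.
- by rewrite coprimeMl ha hb.
rewrite coprime_sym.
apply: (big_ind (fun a => coprime a p)) => [|a b ha hb|q Qq].
- exact: coprime1n.
- by rewrite coprimeMl ha hb.
case/and3P: (H p q Pp Qq) => pp qp ne.
by rewrite prime_coprime // dvdn_prime2 // eq_sym.
Qed.

Lemma coprime_split (R : realType) omega (x y : R) :
  coprime (n_lt omega y) (n_int omega y x).
Proof.
rewrite /n_lt /n_int; apply: coprime_prods => p q.
case/andP=> [/andP[pp py] _] /andP[/andP[/andP[qp yq] _] _].
rewrite pp qp /=; apply/eqP => eqqp; subst q.
by move: py; rewrite ltNge yq.
Qed.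

Lemma n_lt_gt0 (R : realType) omega (y : R) : (0 < n_lt omega y)%N.
Proof.
rewrite /n_lt; apply: (big_ind (fun a => (0 < a)%N)) => // [a b ha hb|p /andP[/andP[pp _] _]].
  by rewrite muln_gt0 ha hb.
exact: prime_gt0.
Qed.

Lemma n_int_gt0 (R : realType) omega (y x : R) : (0 < n_int omega y x)%N.
Proof.
rewrite /n_int; apply: (big_ind (fun a => (0 < a)%N)) => // [a b ha hb|p /andP[/andP[/andP[pp _] _] _]].
  by rewrite muln_gt0 ha hb.
exact: prime_gt0.
Qed.

Lemma Delta_ge (R : realType) (N : nat) (w : R) : (divcount N 1 w)%:R <= Delta N :> R.
Proof.
rewrite /Delta /DeltaV; apply: ub_le_sup; last by exists w.
by exists (tau N)%:R => _ [u _ <-]; rewrite ler_nat count_size.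
Qed.

Lemma cover (R : realType) (N : nat) (u : R) (m : nat) :
  (count (fun d : nat => (expR u < d%:R)%R && (d%:R <= expR (u + m%:R))%R) (divisors N)
    <= \sum_(k < m) divcount N 1 (u + k%:R)%R)%N.
Proof.
elim: m => [|m IH].
  rewrite big_ord0 leqn0 (@eq_count _ _ pred0) ?count_pred0 // => d /=.
  by rewrite addr0 lt_le_asym.
rewrite big_ord_recr /=; apply: leq_trans (leq_add IH (leqnn _)).
rewrite /divcount -count_predUI.
apply: leq_trans (leq_addr _ _); apply: sub_count => d /= /andP[h1 h2].
case: (leP (d%:R) (expR (u + m%:R))) => hd.
  by rewrite h1.
by rewrite -addrA natr1 h2 andbF.
Qed.

Lemma main_count (R : realType) (a b : nat) (v u : R) (m : nat) :
  (0 < a)%N -> (0 < b)%N -> coprime a b -> ln (a%:R : R) <= v -> 2 * v <= m%:R ->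
  (tau a * divcount b v u <=
   count (fun d : nat => (expR u < d%:R)%R && (d%:R <= expR (u + m%:R))%R)
     (divisors (a * b)))%N.
Proof.
move=> a0 b0 cab hv hm.
set P := (fun d : nat => (expR u < d%:R)%R && (d%:R <= expR (u + v))%R).
set L := [seq (d1 * e)%N | d1 <- divisors a, e <- [seq e <- divisors b | P e]].
have -> : (tau a * divcount b v u = size L)%N by rewrite size_allpairs size_filter.
rewrite -size_filter; apply: uniq_leq_size.
- apply: allpairs_uniq; [exact: divisors_uniq | exact/filter_uniq/divisors_uniq | ].
  move=> [d1 e] [d1' e'] /allpairsP[[p1 p2] [/= hp1 hp2 [-> ->]]].
  move=> /allpairsP[[q1 q2] [/= hq1 hq2 [-> ->]]] /= eq.
  move: hp2 hq2; rewrite !mem_filter => /andP[_ hp2] /andP[_ hq2].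
  rewrite -dvdn_divisors // in hp1; rewrite -dvdn_divisors // in hq1.
  rewrite -dvdn_divisors // in hp2; rewrite -dvdn_divisors // in hq2.
  have e1 : p1 = q1.
    apply/eqP; rewrite eqn_dvd; apply/andP; split.
      have : (p1 %| q1 * q2)%N by rewrite -eq dvdn_mulr.
      by rewrite Gauss_dvdl // (coprime_dvdl hp1) // (coprime_dvdr hq2).
    have : (q1 %| p1 * p2)%N by rewrite eq dvdn_mulr.
    by rewrite Gauss_dvdl // (coprime_dvdl hq1) // (coprime_dvdr hp2).
  subst q1; congr pair; apply/eqP.
  by rewrite -(eqn_pmul2l (dvdn_gt0 a0 hp1)) eq.
- move=> z /allpairsP[[d1 e] [/= hd1 he ->]].
  move: he; rewrite mem_filter => /andP[/andP[h1 h2] he].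
  rewrite -dvdn_divisors // in hd1; rewrite -dvdn_divisors // in he.
  have d1pos := dvdn_gt0 a0 hd1.
  rewrite mem_filter -dvdn_divisors ?muln_gt0 ?a0 ?b0 // dvdn_mul // andbT.
  apply/andP; split.
    apply: (lt_le_trans h1); rewrite ler_nat leq_pmull //.
  rewrite natrM.
  have ha : (a%:R : R) = expR (ln a%:R) by rewrite lnK // posrE ltr0n.
  apply: (le_trans (y := a%:R * expR (u + v))).
    by apply: ler_pM => //; rewrite ler_nat dvdn_leq.
  rewrite ha -expRD ler_expR.
  lra.
Qed.

Theorem lemma3p1 (R : realType) (omega : nat -> bool) (x y v : R) :
  1 <= y -> y < x -> ln ((n_lt omega y)%:R : R) <= v ->
  (tau (n_lt omega y))%:R / (2 * v + 1) * DeltaV (n_int omega y x) v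
    <= Delta (n_lt omega x) :> R.
Proof.
move=> y1 yx hv.
rewrite (@n_split R omega x y y1 yx).
have a0 := @n_lt_gt0 R omega y; have b0 := @n_int_gt0 R omega y x.
have cab := @coprime_split R omega x y.
move: hv a0 b0 cab.
set a := n_lt omega y; set b := n_int omega y x => hv a0 b0 cab.
have v0 : 0 <= v by apply: le_trans hv; apply: ln_ge0; rewrite ler1n.
set m := (Num.truncn (2 * v)).+1.
have hm1 : 2 * v <= m%:R by apply: ltW; exact: truncnS_gt.
have hm2 : m%:R <= 2 * v + 1.
  by rewrite /m -natr1 lerD2r truncn_le; lra.
have t0 : (0 < tau a)%N by rewrite /tau; case: (divisors a) (divisor1 a).
have D0 : 0 <= Delta (a * b) :> R by apply: (le_trans _ (Delta_ge R (a * b) 0)).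
have key : forall u : R,
    (divcount b v u)%:R <= (2 * v + 1) * Delta (a * b) / (tau a)%:R.
  move=> u.
  have h := leq_trans (@main_count R a b v u m a0 b0 cab hv hm1) (cover R (a * b) u m).
  rewrite ler_pdivlMr ?ltr0n // -natrM mulnC.
  apply: le_trans (_ : (\sum_(k < m) divcount (a * b) 1 (u + k%:R))%:R <= _).
    by rewrite ler_nat.
  rewrite natr_sum.
  apply: le_trans (_ : \sum_(k < m) Delta (a * b) <= _).
    by apply: ler_sum => k _; apply: Delta_ge.
  rewrite sumr_const card_ord.
  have -> : Delta (a * b) *+ m = m%:R * Delta (a * b) :> R by rewrite mulr_natl.
  by rewrite ler_wpM2r.
have HD : DeltaV b v <= (2 * v + 1) * Delta (a * b) / (tau a)%:R.
  apply: ge_sup; first by exists (divcount b v 0)%:R, 0.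
  by move=> _ [u _ <-]; apply: key.
have tpos : 0 < (tau a)%:R :> R by rewrite ltr0n.
have vpos : 0 < 2 * v + 1 by lra.
apply: le_trans (ler_wpM2l _ HD) _.
  by apply: divr_ge0; [apply: ler0n | apply: ltW].
have E : (tau a)%:R / (2 * v + 1) * ((2 * v + 1) * Delta (a * b) / (tau a)%:R)
    = Delta (a * b) :> R.
  by field; rewrite !gt_eqF.
by rewrite E.
Qed.
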